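(* Let $w\in\mathbb{C}^k$ be a unit vector with $w_i\ne0$ for all $i\in\{1,\ldots,k\}$, let $R'$ be a tolerance relation on $\{1,\ldots,k\}$ and $T':M_k(\mathbb{C})\to A(R')$, $T'(b)=\sum_{(i,j)\in R'}E_{ii}bE_{jj}$, the corresponding truncation map. If $T'(P_w)$ is the weak density matrix of a pure state of $A(R')$ (i.e. the state $a\mapsto \mathrm{Tr}(T'(P_w)a)$ on $A(R')$ is pure), then the graph of $R'$ is connected.
   Context: A tolerance relation is a reflexive and symmetric relation; its graph has an edge between $i\ne j$ whenever $(i,j)\in R'$. $A(R')=T'(M_k(\mathbb{C}))$ is the operator system of matrices vanishing at positions outside $R'$; its states are linear functionals $\varphi$ with $\varphi(a)\ge0$ for positive semidefinite $a\in A(R')$ and $\varphi(1)=1$, and pure states are extremal states. $P_w=(w_i\overline{w_j})_{i,j}$. *)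

(* Defs.v *)
From mathcomp Require Import all_boot all_order all_algebra.
From mathcomp Require Import reals.
From mathcomp.real_closed Require Import complex.
Set Implicit Arguments. Unset Strict Implicit. Unset Printing Implicit Defensive.
Import Order.TTheory GRing.Theory Num.Theory.
Local Open Scope ring_scope.

Definition tolerance (k : nat) (Rel : rel 'I_k) : Prop :=
  reflexive Rel /\ symmetric Rel.

Definition tol_graph (k : nat) (Rel : rel 'I_k) : rel 'I_k :=
  fun i j => (i != j) && Rel i j.

Definition graph_connected (k : nat) (Rel : rel 'I_k) : Prop :=
  forall i j : 'I_k, connect (tol_graph Rel) i j.

Definition inA (R : realType) (k : nat) (Rel : rel 'I_k) (a : 'M[R[i]]_k) : Prop :=
  forall i j, ~~ Rel i j -> a i j = 0.

(* Truncation map T'(b) = sum_{(i,j) in Rel} E_ii b E_jj. *)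
Definition trunc (R : realType) (k : nat) (Rel : rel 'I_k) (b : 'M[R[i]]_k)
  : 'M[R[i]]_k :=
  \matrix_(i, j) (if Rel i j then b i j else 0).

Definition psd (R : realType) (k : nat) (a : 'M[R[i]]_k) : Prop :=
  forall v : 'cV[R[i]]_k, 0 <= ((map_mx Num.conj v)^T *m a *m v) 0 0.

Definition Pw (R : realType) (k : nat) (w : 'cV[R[i]]_k) : 'M[R[i]]_k :=
  \matrix_(i, j) (w i 0 * (w j 0)^*).

(* States of the operator system A(Rel); a functional is represented by a
   function on all matrices, only its values on A(Rel) being relevant. *)
Definition is_state (R : realType) (k : nat) (Rel : rel 'I_k)
  (phi : 'M[R[i]]_k -> R[i]) : Prop :=
  [/\ (forall (c : R[i]) a b, inA Rel a -> inA Rel b ->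
         phi (c *: a + b) = c * phi a + phi b),
      (forall a, inA Rel a -> psd a -> 0 <= phi a) &
      phi 1%:M = 1].

(* Pure state: an extreme point of the state space. (0 < t < 1 in the order
   of R[i] forces t to be real.) *)
Definition is_pure_state (R : realType) (k : nat) (Rel : rel 'I_k)
  (phi : 'M[R[i]]_k -> R[i]) : Prop :=
  is_state Rel phi /\
  forall (t : R[i]) (phi1 phi2 : 'M[R[i]]_k -> R[i]),
    0 < t < 1 -> is_state Rel phi1 -> is_state Rel phi2 ->
    (forall a, inA Rel a -> phi a = t * phi1 a + (1 - t) * phi2 a) ->
    forall a, inA Rel a -> phi1 a = phi2 a.

(* Main.v *)
Require Import Defs.
From mathcomp Require Import all_boot all_order all_algebra.
From mathcomp Require Import reals.
From mathcomp.real_closed Require Import complex.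
From mathcomp Require Import ring.
Import Order.TTheory GRing.Theory Num.Theory.
Local Open Scope ring_scope.
Set Implicit Arguments. Unset Strict Implicit.

Lemma sum0 (V : nmodType) (I : Type) (r : seq I) (P : pred I) (F : I -> V) :
  (forall i, P i -> F i = 0) -> \sum_(i <- r | P i) F i = 0.
Proof. by move=> H; apply: big1_idem => [|i Pi]; [exact: addr0 | exact: H]. Qed.

Lemma sumD1 (V : nmodType) (I : finType) (j : I) (F : I -> V) :
  \sum_i F i = F j + \sum_(i | i != j) F i.
Proof. exact: bigD1. Qed.

Definition Qf (R : realType) (k : nat) (v : 'cV[R[i]]_k) (a : 'M[R[i]]_k) : R[i] :=
  ((map_mx Num.conj v)^T *m a *m v) 0 0.

Lemma QE (R : realType) (k : nat) (v : 'cV[R[i]]_k) (a : 'M[R[i]]_k) :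
  Qf v a = \sum_i \sum_j (v j 0)^* * a j i * v i 0.
Proof.
rewrite /Qf mxE; apply: eq_bigr => i _; rewrite mxE big_distrl.
by apply: eq_bigr => j _; rewrite !mxE.
Qed.

Lemma Qlin (R : realType) (k : nat) (v : 'cV[R[i]]_k) c (a b : 'M[R[i]]_k) :
  Qf v (c *: a + b) = c * Qf v a + Qf v b.
Proof. by rewrite /Qf mulmxDr mulmxDl -scalemxAr -scalemxAl !mxE. Qed.

Lemma Q1 (R : realType) (k : nat) (v : 'cV[R[i]]_k) :
  Qf v 1%:M = \sum_i `|v i 0| ^+ 2.
Proof.
rewrite QE; apply: eq_bigr => i _.
rewrite (sumD1 i) sum0 => [|j ne]; last by rewrite !mxE (negbTE ne) mulr0 mul0r.
by rewrite !mxE eqxx mulr1 addr0 normCK mulrC.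
Qed.

Lemma Qdelta (R : realType) (k : nat) (v : 'cV[R[i]]_k) p :
  Qf v (delta_mx p p) = (v p 0)^* * v p 0.
Proof.
rewrite QE (sumD1 p) sum0 => [|i ne]; last first.
  by rewrite sum0 // => j _; rewrite !mxE (negbTE ne) andbF mulr0 mul0r.
rewrite (sumD1 p) sum0 => [|j ne]; last by rewrite !mxE (negbTE ne) mulr0 mul0r.
by rewrite !mxE eqxx mulr1 !addr0.
Qed.

Lemma stateQ (R : realType) (k : nat) (Rel : rel 'I_k) (v : 'cV[R[i]]_k) (t : R[i]) :
  0 < t -> Qf v 1%:M = t -> is_state Rel (fun a => t^-1 * Qf v a).
Proof.
move=> tgt0 Q1t; split.
- by move=> c a b _ _; rewrite Qlin mulrDr mulrCA.
- move=> a _ Hp; apply: mulr_ge0; first by rewrite invr_ge0 ltW.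
  exact: Hp.
- by rewrite Q1t mulVf // gt_eqF.
Qed.

Theorem lemma4p14 (R : realType) (k : nat) (w : 'cV[R[i]]_k)
  (Rel : rel 'I_k) :
  \sum_(i < k) `|w i 0| ^+ 2 = 1 ->
  (forall i : 'I_k, w i 0 != 0) ->
  tolerance Rel ->
  is_pure_state Rel (fun a : 'M[R[i]]_k => \tr (trunc Rel (Pw w) *m a)) ->
  graph_connected Rel.
Proof.
move=> Hsum Hw [Hrefl Hsym] [_ Hpure] i0 j0; apply: contraT => Hn.
pose S := fun x => connect (tol_graph Rel) i0 x.
have S0 : S i0 by exact: connect0.
have H1 : forall i j, Rel i j -> S i -> S j.
  move=> i j Hij Si; case: (eqVneq i j) => [<-//|ne].
  by apply: connect_trans Si (connect1 _); rewrite /tol_graph ne Hij.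
have Hcross : forall i j, Rel i j -> S i = S j.
  move=> i j Hij; apply/idP/idP; first exact: H1.
  by apply: H1; rewrite Hsym.
pose v1 : 'cV[R[i]]_k := \col_i (if S i then w i 0 else 0).
pose v2 : 'cV[R[i]]_k := \col_i (if S i then 0 else w i 0).
pose t := \sum_(i | S i) `|w i 0| ^+ 2.
have Hsplit : t + \sum_(i | ~~ S i) `|w i 0| ^+ 2 = 1 by rewrite -Hsum [RHS](bigID S).
have Qv1 : Qf v1 1%:M = t.
  rewrite Q1 /t [RHS]big_mkcond; apply: eq_bigr => i _; rewrite mxE.
  by case: (S i); rewrite ?normr0 ?expr0n.
have Qv2 : Qf v2 1%:M = 1 - t.
  rewrite Q1 -Hsplit addrC addKr [RHS]big_mkcond; apply: eq_bigr => i _; rewrite mxE.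
  by case: (S i); rewrite ?normr0 ?expr0n.
have wpos : forall i, 0 < `|w i 0| ^+ 2.
  by move=> i; rewrite exprn_gt0 // normr_gt0.
have tpos : 0 < t.
  rewrite /t (bigD1 i0) //; apply: (lt_le_trans (wpos i0)).
  by rewrite lerDl; apply: sumr_ge0 => i _; rewrite exprn_ge0.
have t1pos : 0 < 1 - t.
  rewrite -Hsplit addrC addKr (bigD1 j0) //; apply: (lt_le_trans (wpos j0)).
  by rewrite lerDl; apply: sumr_ge0 => i _; rewrite exprn_ge0.
have Ht : 0 < t < 1 by rewrite tpos /= -subr_gt0.
have := Hpure t _ _ Ht (stateQ Rel tpos Qv1) (stateQ Rel t1pos Qv2).
have Hdec : forall a, inA Rel a -> \tr (trunc Rel (Pw w) *m a) =
      t * (t^-1 * Qf v1 a) + (1 - t) * ((1 - t)^-1 * Qf v2 a).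
  move=> a HA; rewrite !mulrA !divff ?gt_eqF // !mul1r.
  rewrite !QE -big_split /=; apply: eq_bigr => i _; rewrite mxE -big_split.
  apply: eq_bigr => j _ /=; rewrite !mxE.
  case Hij: (Rel i j).
    have := Hcross i j Hij; rewrite /S.
    by case: (connect _ i0 i); case: (connect _ i0 j) => // _;
      rewrite ?conjC0 ?mulr0 ?mul0r ?addr0 ?add0r; ring.
  rewrite (HA j i); last by rewrite Hsym Hij.
  by rewrite !(mulr0, mul0r) addr0.
move=> /(_ Hdec (delta_mx i0 i0)).
have HA : inA Rel (delta_mx i0 i0 : 'M[R[i]]_k).
  move=> i j Hnr; rewrite mxE; case: (eqVneq i i0) => [Ei|] //=; case: (eqVneq j i0) => [Ej|] //=.
  by move: Hnr; rewrite Ei Ej Hrefl.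
move=> /(_ HA); rewrite !Qdelta !mxE.
have -> : S i0 = true by [].
rewrite conjC0 mul0r mulr0 => /eqP.
rewrite mulf_eq0 invr_eq0 gt_eqF //= mulrC -normCK.
by rewrite expf_eq0 /= normr_eq0 (negbTE (Hw i0)).
Qed.
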